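(* Let $\delta(l)\in\Delta(\mathfrak{t})$, let $\psi=\{k_1(z)\delta(l)\}\psi_0\in\mathcal{M}_{\geqslant0}$ with $k_1\in G_{<0}$ and $\varphi=\{k_2(z)\delta(l)\}\varphi_0\in\mathcal{M}_{<0}$ with $k_2\in G_{\geqslant0}$, and set $U_\alpha:=k_1E_\alpha k_1^{-1}$, $W_\beta:=k_2E_\beta z^{-1}k_2^{-1}$ ($1\le\alpha,\beta\le r$). Suppose that for each $m\ge0$ and $1\le\alpha\le r$ there is $M_{m\alpha}\in\pi_{\geqslant0}(\mathrm{gl}_n(R)[z,z^{-1}))$ (a polynomial in $z$) with $\partial_{m\alpha}(\psi)=M_{m\alpha}\psi$ and $\partial_{m\alpha}(\varphi)=M_{m\alpha}\varphi$, and for each $m<0$ and $1\le\beta\le r$ there is $N_{m\beta}\in\pi_{<0}(\mathrm{gl}_n(R)[z^{-1},z))$ (a polynomial in $z^{-1}$ without constant term) with $\partial_{m\beta}(\psi)=N_{m\beta}\psi$ and $\partial_{m\beta}(\varphi)=N_{m\beta}\varphi$. Then $M_{m\alpha}=\pi_{\geqslant0}(U_\alpha z^m)$, $N_{m\beta}=\pi_{<0}(W_\beta z^{m+1})$, and $(\{U_\alpha\},\{W_\beta\})$ is a solution of the combined $(\mathrm{sl}_n(\mathbb{C}),\mathfrak{t})$-hierarchy (i.e. $(\psi,\varphi)$ is a set of wave matrices of type $\delta(l)$).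
   Context: $R$ is a commutative $\mathbb{C}$-algebra with commuting $\mathbb{C}$-linear derivations $\partial_{m\alpha}$, $m\in\mathbb{Z}$, $1\le\alpha\le r$, acting coefficientwise. $\mathrm{gl}_n(R)[z,z^{-1})$: formal series $\sum_{i=-\infty}^{N}X_iz^i$; $\mathrm{gl}_n(R)[z^{-1},z)$: formal series $\sum_{i=-N}^{\infty}X_iz^i$ ($X_i\in\mathrm{gl}_n(R)$); bracket $[X,Y]=\sum[X_i,Y_j]z^{i+j}$; $\pi_{\geqslant0}$ (resp. $\pi_{<0}$) keeps terms with $i\ge0$ (resp. $i<0$). $\mathfrak{t}\subset\mathrm{sl}_n(\mathbb{C})$ is commutative of maximal dimension $r$, basis $E_1,\dots,E_r$, assumed upper triangular. $G_{<0}=\{\mathrm{Id}+\sum_{i\ge1}Y_iz^{-i}\}$, $G_{\geqslant0}=\{X_0+\sum_{i\ge1}X_iz^i\mid X_0\text{ invertible}\}$ (coefficients in $\mathrm{gl}_n(R)$). For $l\in\mathbb{Z}^n$, $\delta(l)=\mathrm{diag}(z^{l_1},\dots,z^{l_n})$, and $\Delta(\mathfrak{t})=\{\delta(l)\mid [\delta(l),E_\alpha]=0\ \forall\alpha\}$. $\psi_0=\varphi_0$ is a formal symbol (standing for $\exp(\sum_{m\in\mathbb{Z}}\sum_\alpha t_{m\alpha}E_\alpha z^m)$). $\mathcal{M}_{\geqslant0}$ is the set of formal products $\{g\}\psi_0$, $g\in\mathrm{gl}_n(R)[z,z^{-1})$, and $\mathcal{M}_{<0}$ the set of formal products $\{h\}\varphi_0$,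 $h\in\mathrm{gl}_n(R)[z^{-1},z)$ (the factors are kept separate). Left action: $k.\{g\}\psi_0=\{kg\}\psi_0$ for $k\in\mathrm{gl}_n(R)[z,z^{-1})$, and $k.\{h\}\varphi_0=\{kh\}\varphi_0$ for $k\in\mathrm{gl}_n(R)[z^{-1},z)$. Derivations: $\partial_{m\alpha}(\{g\}\psi_0)=\{\partial_{m\alpha}(g)+gE_\alpha z^m\}\psi_0$ and $\partial_{m\alpha}(\{h\}\varphi_0)=\{\partial_{m\alpha}(h)+hE_\alpha z^m\}\varphi_0$. Solution of the combined $(\mathrm{sl}_n(\mathbb{C}),\mathfrak{t})$-hierarchy: for all $m\ge0$ and all $\alpha_1,\alpha_2,\beta$: $\partial_{m\alpha_1}(U_{\alpha_2})=[\pi_{\geqslant0}(U_{\alpha_1}z^m),U_{\alpha_2}]$ and $\partial_{m\alpha_1}(W_\beta)=[\pi_{\geqslant0}(U_{\alpha_1}z^m),W_\beta]$; for all $m<0$ and all $\beta_1,\beta_2,\alpha$: $\partial_{m\beta_1}(W_{\beta_2})=[\pi_{<0}(W_{\beta_1}z^{m+1}),W_{\beta_2}]$ and $\partial_{m\beta_1}(U_\alpha)=[\pi_{<0}(W_{\beta_1}z^{m+1}),U_\alpha]$. *)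

(* Defs.v *)
From HB Require Import structures.
From mathcomp Require Import all_boot all_order all_algebra.
Set Implicit Arguments. Unset Strict Implicit. Unset Printing Implicit Defensive.
Import Order.TTheory GRing.Theory Num.Theory.
Local Open Scope ring_scope.

(* Conventions:
   - the base field C is an arbitrary numClosedFieldType F (C is one);
   - R : comAlgType F  is the commutative F-algebra R;
   - gl_n(R)[z,z^{-1})  (finitely many positive powers) = [lser R n]:
       a coefficient function int -> 'M[R]_n together with an upper bound
       on its support;
   - gl_n(R)[z^{-1},z)  (finitely many negative powers) = [user R n]:
       coefficient function together with a lower bound on its support;
   - polynomials in z, z^{-1} (finite Laurent polynomials) = [laur R n],
       which embed in both.
   Equalities of series are coefficientwise (the stored bound is only a
   certificate).  Formal products {g}psi_0 are represented by g itself,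
   since the two factors are kept separate. *)

Section Series.
Variables (F : numClosedFieldType) (R : comAlgType F) (n : nat).
Local Notation mat := 'M[R]_n.

Record lser := LSer {
  lbound : int;
  lcoef : int -> mat;
  lcoef_supp : forall i, lbound < i -> lcoef i = 0 }.

Definition lser_eq (X Y : lser) : Prop := forall i, lcoef X i = lcoef Y i.

Definition lmul_coef (X Y : lser) (k : int) : mat :=
  \sum_(t < absz (lbound X + lbound Y - k + 1))
     lcoef X (lbound X - t%:Z) *m lcoef Y (k - lbound X + t%:Z).

Lemma lmul_supp (X Y : lser) i : lbound X + lbound Y < i -> lmul_coef X Y i = 0.
Proof.
move=> hi; rewrite /lmul_coef big1 // => t _.
rewrite (@lcoef_supp Y) ?mulmx0 //.
have h1 : lbound Y < i - lbound X by rewrite ltrBrDl.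
apply: (lt_le_trans h1); rewrite lerDl //.
Qed.

Definition lmul (X Y : lser) : lser :=
  @LSer (lbound X + lbound Y) (lmul_coef X Y) (@lmul_supp X Y).

Lemma ladd_supp (X Y : lser) i : Num.max (lbound X) (lbound Y) < i ->
  lcoef X i + lcoef Y i = 0.
Proof.
rewrite gt_max => /andP[h1 h2].
by rewrite (lcoef_supp h1) (lcoef_supp h2) addr0.
Qed.

Definition ladd (X Y : lser) : lser :=
  @LSer (Num.max (lbound X) (lbound Y)) (fun i => lcoef X i + lcoef Y i)
        (@ladd_supp X Y).

Lemma lopp_supp (X : lser) i : lbound X < i -> - lcoef X i = 0.
Proof. by move=> h; rewrite (lcoef_supp h) oppr0. Qed.

Definition lopp (X : lser) : lser :=
  @LSer (lbound X) (fun i => - lcoef X i) (@lopp_supp X).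

Definition lcomm (X Y : lser) : lser := ladd (lmul X Y) (lopp (lmul Y X)).

Lemma lmono_supp (A : mat) (m : int) i : m < i ->
  (if i == m then A else 0) = 0.
Proof. by move=> h; rewrite ifN // gt_eqF. Qed.

Definition lmono (A : mat) (m : int) : lser :=
  @LSer m (fun i => if i == m then A else 0) (@lmono_supp A m).

Lemma lder_supp (D : R -> R) (X : lser) i : lbound X < i ->
  (if i <= lbound X then map_mx D (lcoef X i) else 0) = 0.
Proof. by move=> h; rewrite ifN // -ltNge. Qed.

Definition lder (D : R -> R) (X : lser) : lser :=
  @LSer (lbound X) (fun i => if i <= lbound X then map_mx D (lcoef X i) else 0)
        (@lder_supp D X).

Record user := USer {
  ubound : int;
  ucoef : int -> mat;
  ucoef_supp : forall i, i < ubound -> ucoef i = 0 }.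

Definition user_eq (X Y : user) : Prop := forall i, ucoef X i = ucoef Y i.

Definition umul_coef (X Y : user) (k : int) : mat :=
  \sum_(t < absz (k - ubound X - ubound Y + 1))
     ucoef X (ubound X + t%:Z) *m ucoef Y (k - ubound X - t%:Z).

Lemma umul_supp (X Y : user) i : i < ubound X + ubound Y -> umul_coef X Y i = 0.
Proof.
move=> hi; rewrite /umul_coef big1 // => t _.
rewrite (@ucoef_supp Y) ?mulmx0 //.
have h1 : i - ubound X < ubound Y by rewrite ltrBlDl.
apply: (le_lt_trans _ h1); rewrite gerBl //.
Qed.

Definition umul (X Y : user) : user :=
  @USer (ubound X + ubound Y) (umul_coef X Y) (@umul_supp X Y).

Lemma uadd_supp (X Y : user) i : i < Num.min (ubound X) (ubound Y) ->
  ucoef X i + ucoef Y i = 0.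
Proof.
rewrite lt_min => /andP[h1 h2].
by rewrite (ucoef_supp h1) (ucoef_supp h2) addr0.
Qed.

Definition uadd (X Y : user) : user :=
  @USer (Num.min (ubound X) (ubound Y)) (fun i => ucoef X i + ucoef Y i)
        (@uadd_supp X Y).

Lemma uopp_supp (X : user) i : i < ubound X -> - ucoef X i = 0.
Proof. by move=> h; rewrite (ucoef_supp h) oppr0. Qed.

Definition uopp (X : user) : user :=
  @USer (ubound X) (fun i => - ucoef X i) (@uopp_supp X).

Definition ucomm (X Y : user) : user := uadd (umul X Y) (uopp (umul Y X)).

Lemma umono_supp (A : mat) (m : int) i : i < m ->
  (if i == m then A else 0) = 0.
Proof. by move=> h; rewrite ifN // lt_eqF. Qed.

Definition umono (A : mat) (m : int) : user :=
  @USer m (fun i => if i == m then A else 0) (@umono_supp A m).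

Lemma uder_supp (D : R -> R) (X : user) i : i < ubound X ->
  (if ubound X <= i then map_mx D (ucoef X i) else 0) = 0.
Proof. by move=> h; rewrite ifN // -ltNge. Qed.

Definition uder (D : R -> R) (X : user) : user :=
  @USer (ubound X) (fun i => if ubound X <= i then map_mx D (ucoef X i) else 0)
        (@uder_supp D X).

Record laur := Laur {
  llo : int;
  lhi : int;
  pcoef : int -> mat;
  pcoef_supp : forall i, (i < llo) || (lhi < i) -> pcoef i = 0 }.

Definition laur_eq (P Q : laur) : Prop := forall i, pcoef P i = pcoef Q i.

Lemma laur_l_supp (P : laur) i : lhi P < i -> pcoef P i = 0.
Proof. by move=> h; apply: pcoef_supp; rewrite h orbT. Qed.
Definition laur_l (P : laur) : lser := @LSer (lhi P) (pcoef P) (@laur_l_supp P).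

Lemma laur_u_supp (P : laur) i : i < llo P -> pcoef P i = 0.
Proof. by move=> h; apply: pcoef_supp; rewrite h. Qed.
Definition laur_u (P : laur) : user := @USer (llo P) (pcoef P) (@laur_u_supp P).

Lemma piGe0_supp (X : lser) i : (i < 0) || (lbound X < i) ->
  (if 0 <= i then lcoef X i else 0) = 0.
Proof.
case/orP=> h; first by rewrite ifN // -ltNge.
by case: ifP => _ //; rewrite (lcoef_supp h).
Qed.
Definition piGe0 (X : lser) : laur :=
  @Laur 0 (lbound X) (fun i => if 0 <= i then lcoef X i else 0) (@piGe0_supp X).

Lemma piLt0_supp (X : user) i : (i < ubound X) || (-1 < i) ->
  (if i < 0 then ucoef X i else 0) = 0.
Proof.
case/orP=> h; first by case: ifP => _ //; rewrite (ucoef_supp h).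
rewrite ifN // -leNgt; move: h; rewrite -(ltrD2r 1) addNr; by rewrite ltzD1.
Qed.
Definition piLt0 (X : user) : laur :=
  @Laur (ubound X) (-1) (fun i => if i < 0 then ucoef X i else 0) (@piLt0_supp X).

Definition delta_coef (l : 'I_n -> int) (i : int) : mat :=
  \matrix_(a, b) (if (a == b) && (l a == i) then 1 else 0).

Lemma le_sum_abs (l : 'I_n -> int) a : `|l a| <= \sum_b `|l b|.
Proof.
rewrite (bigD1 a) //= lerDl sumr_ge0 // => b _; exact: normr_ge0.
Qed.

Lemma ldelta_supp (l : 'I_n -> int) i : \sum_b `|l b| < i -> delta_coef l i = 0.
Proof.
move=> h; apply/matrixP => a b; rewrite !mxE.
case: ifP => // /andP[_ /eqP e]; move: h; rewrite -e.
by move=> h; have := le_lt_trans (le_trans (ler_norm _) (le_sum_abs l a)) h;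
   rewrite ltxx.
Qed.
Definition ldelta (l : 'I_n -> int) : lser :=
  @LSer (\sum_b `|l b|) (delta_coef l) (@ldelta_supp l).

Lemma udelta_supp (l : 'I_n -> int) i : i < - \sum_b `|l b| -> delta_coef l i = 0.
Proof.
move=> h; apply/matrixP => a b; rewrite !mxE.
case: ifP => // /andP[_ /eqP e]; move: h; rewrite -e.
move=> h; have h2 : - \sum_b `|l b| <= l a.
  by rewrite lerNl (le_trans _ (le_sum_abs l a)) // -normrN ler_norm.
by have := lt_le_trans h h2; rewrite ltxx.
Qed.
Definition udelta (l : 'I_n -> int) : user :=
  @USer (- \sum_b `|l b|) (delta_coef l) (@udelta_supp l).

End Series.

Definition liftmx (F : numClosedFieldType) (R : comAlgType F) (n : nat)
  (A : 'M[F]_n) : 'M[R]_n := map_mx (fun a : F => a%:A) A.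

Definition is_derivation (F : numClosedFieldType) (R : comAlgType F)
  (D : R -> R) : Prop :=
  [/\ forall x y, D (x + y) = D x + D y,
      forall (c : F) x, D (c *: x) = c *: D x &
      forall x y, D (x * y) = D x * y + x * D y].

(* E_1..E_r is a basis of a maximal commutative subalgebra t of sl_n(C)
   consisting of upper triangular matrices *)
Definition is_t_basis (F : numClosedFieldType) (n r : nat)
  (E : 'I_r -> 'M[F]_n) : Prop :=
  [/\ forall a, \tr (E a) = 0,
      forall a b, E a *m E b = E b *m E a,
      forall c : 'I_r -> F, \sum_a c a *: E a = 0 -> forall a, c a = 0,
      forall a (i j : 'I_n), (j < i)%N -> E a i j = 0 &
      forall X : 'M[F]_n, \tr X = 0 -> (forall a, X *m E a = E a *m X) ->
        exists c : 'I_r -> F, X = \sum_a c a *: E a].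

Definition in_Gneg (F : numClosedFieldType) (R : comAlgType F) (n : nat)
  (k : lser R n) : Prop :=
  lcoef k 0 = 1%:M /\ forall i : int, 0 < i -> lcoef k i = 0.

Definition in_Gnonneg (F : numClosedFieldType) (R : comAlgType F) (n : nat)
  (k : user R n) : Prop :=
  (forall i : int, i < 0 -> ucoef k i = 0) /\
  exists B : 'M[R]_n, B *m ucoef k 0 = 1%:M /\ ucoef k 0 *m B = 1%:M.

Definition combined_solution (F : numClosedFieldType) (R : comAlgType F)
  (n r : nat) (D : int -> 'I_r -> R -> R)
  (U : 'I_r -> lser R n) (W : 'I_r -> user R n) : Prop :=
  [/\ forall (m : int) a1 a2, 0 <= m ->
        lser_eq (lder (D m a1) (U a2))
                (lcomm (laur_l (piGe0 (lmul (U a1) (lmono 1%:M m)))) (U a2)),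
      forall (m : int) a1 b, 0 <= m ->
        user_eq (uder (D m a1) (W b))
                (ucomm (laur_u (piGe0 (lmul (U a1) (lmono 1%:M m)))) (W b)),
      forall (m : int) b1 b2, m < 0 ->
        user_eq (uder (D m b1) (W b2))
                (ucomm (laur_u (piLt0 (umul (W b1) (umono 1%:M (m + 1))))) (W b2)) &
      forall (m : int) b a, m < 0 ->
        lser_eq (lder (D m b) (U a))
                (lcomm (laur_l (piLt0 (umul (W b) (umono 1%:M (m + 1))))) (U a))].

(* Main.v *)
Require Import Defs.
From HB Require Import structures.
From mathcomp Require Import all_boot all_order all_algebra zify ring.
From Stdlib Require Import Setoid Morphisms.
Set Implicit Arguments. Unset Strict Implicit. Unset Printing Implicit Defensive.
Import Order.TTheory GRing.Theory Num.Theory.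
Local Open Scope ring_scope.

Section Rng.
Variable (V : zmodType).

Definition rng (hi : int) (N : nat) : seq int := [seq hi - t%:Z | t <- iota 0 N].

Lemma mem_rng i hi N : (i \in rng hi N) = (hi - N%:Z < i <= hi).
Proof.
apply/mapP/idP.
  by case=> t; rewrite mem_iota add0n => /andP[_ ht] ->; lia.
move=> h; exists (absz (hi - i)); first by rewrite mem_iota add0n; lia.
lia.
Qed.

Lemma uniq_rng hi N : uniq (rng hi N).
Proof.
rewrite map_inj_uniq ?iota_uniq // => x y h; lia.
Qed.

Lemma sum_supp (f : int -> V) (s1 s2 : seq int) : uniq s1 -> uniq s2 ->
  (forall i, i \notin s1 -> f i = 0) -> (forall i, i \notin s2 -> f i = 0) ->
  \sum_(i <- s1) f i = \sum_(i <- s2) f i.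
Proof.
move=> u1 u2 h1 h2.
have e : forall (s t : seq int), (forall i, i \notin t -> f i = 0) ->
    \sum_(i <- s) f i = \sum_(i <- filter (mem t) s) f i.
  move=> s t ht; rewrite big_filter [LHS](bigID (mem t)) /=.
  rewrite [X in _ + X]big1 ?addr0; last by move=> i /ht.
  by apply: eq_bigl.
rewrite (e s1 s2 h2) (e s2 s1 h1); apply: perm_big; apply: uniq_perm.
- exact: filter_uniq. - exact: filter_uniq.
by move=> i; rewrite !mem_filter andbC.
Qed.

Definition covers (s : seq int) (lo hi : int) := forall i, lo <= i <= hi -> i \in s.

Definition crng (lo hi : int) := rng hi (absz (hi - lo + 1)).

Lemma covers_crng lo hi : covers (crng lo hi) lo hi.
Proof. by move=> i h; rewrite mem_rng; lia. Qed.

Lemma covers_sub s lo hi lo' hi' : covers s lo hi -> lo <= lo' -> hi' <= hi ->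
  covers s lo' hi'.
Proof. by move=> h l1 l2 i hi1; apply: h; lia. Qed.

Lemma sum_cover (f : int -> V) (s : seq int) lo hi : uniq s -> covers s lo hi ->
  (forall i, i < lo -> f i = 0) -> (forall i, hi < i -> f i = 0) ->
  \sum_(i <- s) f i = \sum_(i <- crng lo hi) f i.
Proof.
move=> us cs hlo hhi; apply: sum_supp => //; first exact: uniq_rng.
- move=> i ni; have [h|h] := ltP i lo; first exact: hlo.
  have [h'|h'] := ltP hi i; first exact: hhi.
  by move: ni; rewrite cs // h h'.
- move=> i; rewrite mem_rng => ni.
  have [h|h] := ltP i lo; first exact: hlo.
  apply: hhi; move: ni; rewrite negb_and -!ltNge => /orP[]; lia.
Qed.

Lemma sum_cover2 (f : int -> V) (s1 s2 : seq int) lo hi : uniq s1 -> uniq s2 ->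
  covers s1 lo hi -> covers s2 lo hi ->
  (forall i, i < lo -> f i = 0) -> (forall i, hi < i -> f i = 0) ->
  \sum_(i <- s1) f i = \sum_(i <- s2) f i.
Proof.
move=> u1 u2 c1 c2 h1 h2; rewrite (sum_cover u1 c1 h1 h2).
by rewrite (sum_cover u2 c2 h1 h2).
Qed.

Lemma sum_single (f : int -> V) (s : seq int) j : uniq s -> j \in s ->
  (forall i, i != j -> f i = 0) -> \sum_(i <- s) f i = f j.
Proof.
move=> us js h; rewrite (@sum_supp f s [:: j]) ?big_seq1 //.
- by move=> i ni; apply: h; apply: contraNneq ni => ->.
- by move=> i; rewrite inE => /h.
Qed.

End Rng.

Section Lser.
Variables (F : numClosedFieldType) (R : comAlgType F) (n : nat).
Local Notation mat := 'M[R]_n.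
Local Notation lser := (lser R n).
Implicit Types (X Y Z : lser).

Lemma lcoef_gt X i : lbound X < i -> lcoef X i = 0.
Proof. exact: lcoef_supp. Qed.

Lemma lmulE X Y k (s : seq int) : uniq s -> covers s (k - lbound Y) (lbound X) ->
  lcoef (lmul X Y) k = \sum_(i <- s) lcoef X i *m lcoef Y (k - i).
Proof.
move=> us cs; rewrite /= /lmul_coef.
have -> : \sum_(t < absz (lbound X + lbound Y - k + 1))
     lcoef X (lbound X - t%:Z) *m lcoef Y (k - lbound X + t%:Z) =
   \sum_(i <- rng (lbound X) (absz (lbound X + lbound Y - k + 1)))
     lcoef X i *m lcoef Y (k - i).
  rewrite /rng big_map.
  set N := absz _.
  rewrite -[in RHS](subn0 N) -/(index_iota 0 N) big_mkord.
  by apply: eq_bigr => t _; congr (_ *m lcoef Y _); lia.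
apply: (@sum_cover2 _ _ _ _ (k - lbound Y) (lbound X)) => //.
- exact: uniq_rng.
- by move=> i hi; rewrite mem_rng; lia.
- by move=> i hi; rewrite (@lcoef_gt Y) ?mulmx0 //; lia.
- by move=> i hi; rewrite (@lcoef_gt X) ?mul0mx.
Qed.

Lemma lser_eq_refl X : lser_eq X X. Proof. by []. Qed.
Lemma lser_eq_sym X Y : lser_eq X Y -> lser_eq Y X. Proof. by move=> h i. Qed.
Lemma lser_eq_trans X Y Z : lser_eq X Y -> lser_eq Y Z -> lser_eq X Z.
Proof. by move=> h1 h2 i; rewrite h1 h2. Qed.

Add Parametric Relation : lser (@lser_eq F R n)
  reflexivity proved by lser_eq_refl
  symmetry proved by lser_eq_sym
  transitivity proved by lser_eq_trans as lser_eq_rel.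

Ltac cov := apply: covers_sub; first exact: covers_crng; simpl; lia.

Lemma lmul_congr X X' Y Y' : lser_eq X X' -> lser_eq Y Y' ->
  lser_eq (lmul X Y) (lmul X' Y').
Proof.
move=> hX hY k.
set s := crng (k - `|lbound Y| - `|lbound Y'|) (`|lbound X| + `|lbound X'|).
rewrite (@lmulE _ _ _ s) ?uniq_rng //; last by cov.
rewrite (@lmulE _ _ _ s) ?uniq_rng //; last by cov.
by apply: eq_bigr => i _; rewrite hX hY.
Qed.

Add Parametric Morphism : (@lmul F R n) with signature
  (@lser_eq F R n) ==> (@lser_eq F R n) ==> (@lser_eq F R n) as lmul_mor.
Proof. by move=> *; apply: lmul_congr. Qed.

Add Parametric Morphism : (@ladd F R n) with signature
  (@lser_eq F R n) ==> (@lser_eq F R n) ==> (@lser_eq F R n) as ladd_mor.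
Proof. by move=> X X' h Y Y' h' i /=; rewrite h h'. Qed.

Add Parametric Morphism : (@lopp F R n) with signature
  (@lser_eq F R n) ==> (@lser_eq F R n) as lopp_mor.
Proof. by move=> X X' h i /=; rewrite h. Qed.

Lemma lmul_mono_r X A m k : lcoef (lmul X (lmono A m)) k = lcoef X (k - m) *m A.
Proof.
set s := crng (k - m) (`|lbound X| + `|k - m|).
rewrite (@lmulE _ _ _ s) ?uniq_rng //; last by cov.
rewrite (@sum_single _ _ _ (k - m)) ?uniq_rng //=.
- by rewrite ifT //; apply/eqP; lia.
- by apply: covers_crng; lia.
- by move=> i hi; rewrite ifN ?mulmx0 //; apply/eqP; move/eqP: hi; lia.
Qed.

Lemma lmul_mono_l X A m k : lcoef (lmul (lmono A m) X) k = A *m lcoef X (k - m).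
Proof.
set s := crng (- `|k| - `|lbound X| - `|m|) (`|m|).
rewrite (@lmulE _ _ _ s) ?uniq_rng //; last by cov.
rewrite (@sum_single _ _ _ m) ?uniq_rng //=.
- by rewrite eqxx.
- by apply: covers_crng; lia.
- by move=> i hi; rewrite ifN ?mul0mx.
Qed.

Lemma lmulA X Y Z : lser_eq (lmul (lmul X Y) Z) (lmul X (lmul Y Z)).
Proof.
move=> k.
set s := crng (k - `|lbound Y| - `|lbound Z|) (`|lbound X| + `|lbound Y|).
have us : uniq s by exact: uniq_rng.
rewrite (@lmulE _ _ _ s) //; last by cov.
rewrite (@lmulE X _ _ s) //; last by rewrite /=; cov.
transitivity (\sum_(i <- s) \sum_(j <- s)
   lcoef X j *m lcoef Y (i - j) *m lcoef Z (k - i)).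
  apply: eq_bigr => i _.
  have [h|h] := ltP (lbound Z) (k - i).
    by rewrite (@lcoef_gt Z) // mulmx0 big1 // => j _; rewrite mulmx0.
  rewrite (@lmulE _ _ _ s) //; last by cov.
  by rewrite mulmx_suml.
transitivity (\sum_(j <- s) \sum_(i <- s)
   lcoef X j *m lcoef Y (i - j) *m lcoef Z (k - i)).
  exact: exchange_big.
apply: eq_bigr => j _.
have [h|h] := ltP (lbound X) j.
  by rewrite (@lcoef_gt X) // mul0mx big1 // => i _; rewrite !mul0mx.
have us' : uniq (map (fun i => i - j) s) by rewrite map_inj_uniq // => x y; lia.
have cs' : covers (map (fun i => i - j) s) (k - j - lbound Z) (lbound Y).
  move=> i hi; have -> : i = (i + j) - j by lia.
  by apply: map_f; apply: covers_crng; lia.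
rewrite (@lmulE Y Z _ _ us' cs').
rewrite mulmx_sumr [RHS]big_map; apply: eq_bigr => i _.
by rewrite mulmxA; congr (_ *m lcoef Z _); lia.
Qed.

Lemma lmulDl X Y Z : lser_eq (lmul (ladd X Y) Z) (ladd (lmul X Z) (lmul Y Z)).
Proof.
move=> k.
set s := crng (k - `|lbound Z|) (`|lbound X| + `|lbound Y|).
have us : uniq s by exact: uniq_rng.
change (lcoef (lmul (ladd X Y) Z) k = lcoef (lmul X Z) k + lcoef (lmul Y Z) k).
rewrite (@lmulE (ladd X Y) Z k s) //; last by cov.
rewrite (@lmulE X Z k s) //; last by cov.
rewrite (@lmulE Y Z k s) //; last by cov.
by rewrite -big_split /=; apply: eq_bigr => i _; rewrite mulmxDl.
Qed.

Lemma lmulDr X Y Z : lser_eq (lmul X (ladd Y Z)) (ladd (lmul X Y) (lmul X Z)).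
Proof.
move=> k.
set s := crng (k - `|lbound Z| - `|lbound Y|) (`|lbound X|).
have us : uniq s by exact: uniq_rng.
change (lcoef (lmul X (ladd Y Z)) k = lcoef (lmul X Y) k + lcoef (lmul X Z) k).
rewrite (@lmulE X (ladd Y Z) k s) //; last by cov.
rewrite (@lmulE X Y k s) //; last by cov.
rewrite (@lmulE X Z k s) //; last by cov.
by rewrite -big_split /=; apply: eq_bigr => i _; rewrite mulmxDr.
Qed.

Lemma lmulNl X Y : lser_eq (lmul (lopp X) Y) (lopp (lmul X Y)).
Proof.
move=> k.
set s := crng (k - `|lbound Y|) (`|lbound X|).
have us : uniq s by exact: uniq_rng.
change (lcoef (lmul (lopp X) Y) k = - lcoef (lmul X Y) k).
rewrite (@lmulE (lopp X) Y k s) //; last by cov.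
rewrite (@lmulE X Y k s) //; last by cov.
by rewrite -sumrN; apply: eq_bigr => i _; rewrite mulNmx.
Qed.

Lemma lmulNr X Y : lser_eq (lmul X (lopp Y)) (lopp (lmul X Y)).
Proof.
move=> k.
set s := crng (k - `|lbound Y|) (`|lbound X|).
have us : uniq s by exact: uniq_rng.
change (lcoef (lmul X (lopp Y)) k = - lcoef (lmul X Y) k).
rewrite (@lmulE X (lopp Y) k s) //; last by cov.
rewrite (@lmulE X Y k s) //; last by cov.
by rewrite -sumrN; apply: eq_bigr => i _; rewrite mulmxN.
Qed.

Lemma laddE X Y i : lcoef (ladd X Y) i = lcoef X i + lcoef Y i. Proof. by []. Qed.
Lemma loppE X i : lcoef (lopp X) i = - lcoef X i. Proof. by []. Qed.
Lemma lmonoE (A : mat) m i : lcoef (lmono A m) i = if i == m then A else 0. Proof. by []. Qed.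

Lemma lmul1l X : lser_eq (lmul (lmono 1%:M 0) X) X.
Proof. by move=> k; rewrite lmul_mono_l mul1mx subr0. Qed.
Lemma lmul1r X : lser_eq (lmul X (lmono 1%:M 0)) X.
Proof. by move=> k; rewrite lmul_mono_r mulmx1 subr0. Qed.

Lemma lmul_null_r X Y : (forall i, lcoef Y i = 0) -> forall k, lcoef (lmul X Y) k = 0.
Proof.
move=> h k; rewrite (@lmulE _ _ _ (crng (k - lbound Y) (lbound X))) ?uniq_rng //.
  by rewrite big1 // => i _; rewrite h mulmx0.
exact: covers_crng.
Qed.
Lemma lmul_null_l X Y : (forall i, lcoef X i = 0) -> forall k, lcoef (lmul X Y) k = 0.
Proof.
move=> h k; rewrite (@lmulE _ _ _ (crng (k - lbound Y) (lbound X))) ?uniq_rng //.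
  by rewrite big1 // => i _; rewrite h mul0mx.
exact: covers_crng.
Qed.

Lemma lmul_zero_above X Y (a b : int) j : (forall t, a < t -> lcoef X t = 0) ->
  (forall t, b < t -> lcoef Y t = 0) -> a + b < j -> lcoef (lmul X Y) j = 0.
Proof.
move=> hX hY hj; rewrite (@lmulE _ _ _ (crng (j - lbound Y) (lbound X))) ?uniq_rng //.
  rewrite big1 // => t _; have [h|h] := ltP a t; first by rewrite hX ?mul0mx.
  by rewrite hY ?mulmx0 //; lia.
exact: covers_crng.
Qed.

Lemma mono_mul (A B : mat) p q k :
  lcoef (lmul (lmono A p) (lmono B q)) k = if k == p + q then A *m B else 0.
Proof.
rewrite lmul_mono_l lmonoE; case: eqP => h; case: eqP => h' //; try lia.
by rewrite mulmx0.
Qed.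

Lemma lmono1_comm X m : lser_eq (lmul (lmono 1%:M m) X) (lmul X (lmono 1%:M m)).
Proof. by move=> k; rewrite lmul_mono_l lmul_mono_r mul1mx mulmx1. Qed.

Lemma mono_split (A : mat) p q :
  lser_eq (lmono A (p + q)) (lmul (lmono A p) (lmono 1%:M q)).
Proof. by move=> k; rewrite mono_mul mulmx1. Qed.

Section Delta.
Variables (l : 'I_n -> int) (Dl : lser).
Hypothesis hDl : forall i, lcoef Dl i = @delta_coef F R n l i.

Lemma lmul_delta X k a b : lcoef (lmul X Dl) k a b = lcoef X (k - l b) a b.
Proof.
set s := crng (k - `|lbound Dl| - `|l b|) (`|lbound X| + `|k - l b|).
rewrite (@lmulE _ _ _ s) ?uniq_rng //; last by cov.
rewrite summxE (@sum_single _ _ _ (k - l b)) ?uniq_rng //.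
- rewrite !mxE (bigD1 b) //= big1 ?addr0.
    by rewrite hDl mxE eqxx /= ifT ?mulr1 //; apply/eqP; lia.
  by move=> c hc; rewrite hDl mxE (negbTE hc) mulr0.
- by apply: covers_crng; lia.
- move=> i hi; rewrite !mxE big1 // => c _; rewrite hDl mxE.
  case: ifP => [/andP[/eqP -> /eqP h]|]; last by rewrite mulr0.
  by move/eqP: hi; lia.
Qed.

Lemma delta_cancel X Y : lser_eq (lmul X Dl) (lmul Y Dl) -> lser_eq X Y.
Proof.
move=> h j; apply/matrixP => a b.
have := congr1 (fun M : mat => M a b) (h (j + l b)).
by rewrite /= !lmul_delta addrK.
Qed.

Lemma delta_comm (A : mat) m : (forall k, @delta_coef F R n l k *m A = A *m @delta_coef F R n l k) ->
  lser_eq (lmul Dl (lmono A m)) (lmul (lmono A m) Dl).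
Proof. by move=> h k; rewrite lmul_mono_r lmul_mono_l !hDl h. Qed.

End Delta.

Section Der.
Variable (D : R -> R).
Hypothesis hD : is_derivation D.

Lemma D_add x y : D (x + y) = D x + D y. Proof. by case: hD. Qed.
Lemma D_mul x y : D (x * y) = D x * y + x * D y. Proof. by case: hD. Qed.
Lemma D_scale (c : F) x : D (c *: x) = c *: D x. Proof. by case: hD. Qed.
Lemma D_0 : D 0 = 0.
Proof. have h := D_add 0 0; rewrite addr0 in h; apply: (addrI (D 0)); by rewrite addr0 -h. Qed.
Lemma D_opp x : D (- x) = - D x.
Proof. by apply/eqP; rewrite -subr_eq0 opprK -D_add addNr D_0. Qed.
Lemma D_sum I (r : seq I) (P : pred I) (f : I -> R) :
  D (\sum_(i <- r | P i) f i) = \sum_(i <- r | P i) D (f i).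
Proof. exact: (big_morph _ D_add D_0). Qed.
Lemma D_1 : D 1 = 0.
Proof.
have h := D_mul 1 1; rewrite !mul1r mulr1 in h; apply: (addrI (D 1)); by rewrite addr0 -h.
Qed.
Lemma D_alg (c : F) : D (c%:A) = 0.
Proof. by rewrite D_scale D_1 scaler0. Qed.

Lemma mapD_0 : map_mx D (0 : mat) = 0.
Proof. by apply/matrixP => i j; rewrite !mxE D_0. Qed.
Lemma mapD_add (A B : mat) : map_mx D (A + B) = map_mx D A + map_mx D B.
Proof. by apply/matrixP => i j; rewrite !mxE D_add. Qed.
Lemma mapD_opp (A : mat) : map_mx D (- A) = - map_mx D A.
Proof. by apply/matrixP => i j; rewrite !mxE D_opp. Qed.
Lemma mapD_sum (r : seq int) (f : int -> mat) :
  map_mx D (\sum_(i <- r) f i) = \sum_(i <- r) map_mx D (f i).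
Proof. exact: (big_morph _ mapD_add mapD_0). Qed.
Lemma mapD_mul (A B : mat) :
  map_mx D (A *m B) = map_mx D A *m B + A *m map_mx D B.
Proof.
apply/matrixP => i j; rewrite !mxE D_sum -big_split /=.
by apply: eq_bigr => c _; rewrite D_mul !mxE.
Qed.

Lemma lderE X i : lcoef (lder D X) i = map_mx D (lcoef X i).
Proof.
rewrite /=; case: ifP => // /negbT; rewrite -ltNge => h.
by rewrite lcoef_gt // mapD_0.
Qed.

Lemma lder_congr X Y : lser_eq X Y -> lser_eq (lder D X) (lder D Y).
Proof. by move=> h i; rewrite !lderE h. Qed.

Lemma lder_mul X Y :
  lser_eq (lder D (lmul X Y)) (ladd (lmul (lder D X) Y) (lmul X (lder D Y))).
Proof.
move=> k.
set s := crng (k - `|lbound Y|) (`|lbound X|).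
have us : uniq s by exact: uniq_rng.
change (lcoef (lder D (lmul X Y)) k =
   lcoef (lmul (lder D X) Y) k + lcoef (lmul X (lder D Y)) k).
rewrite lderE (@lmulE X Y k s) //; last by cov.
rewrite (@lmulE (lder D X) Y k s) //; last by cov.
rewrite (@lmulE X (lder D Y) k s) //; last by cov.
rewrite mapD_sum -big_split; apply: eq_bigr => i _.
by rewrite mapD_mul !lderE.
Qed.

Lemma lder_add X Y : lser_eq (lder D (ladd X Y)) (ladd (lder D X) (lder D Y)).
Proof.
move=> i; transitivity (lcoef (lder D X) i + lcoef (lder D Y) i); last by [].
by rewrite !lderE /= mapD_add.
Qed.

Lemma lder_opp X : lser_eq (lder D (lopp X)) (lopp (lder D X)).
Proof.
move=> i; transitivity (- lcoef (lder D X) i); last by [].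
by rewrite !lderE /= mapD_opp.
Qed.

Lemma lder_liftmono (A : 'M[F]_n) m i : lcoef (lder D (lmono (liftmx R A) m)) i = 0.
Proof.
rewrite lderE /=; case: ifP => _; last exact: mapD_0.
by apply/matrixP => a b; rewrite !mxE D_alg.
Qed.

Lemma lder_mono_const (A : mat) m i : (forall a b, D (A a b) = 0) ->
  lcoef (lder D (lmono A m)) i = 0.
Proof.
move=> h; rewrite lderE lmonoE; case: ifP => _; last exact: mapD_0.
by apply/matrixP => a b; rewrite !mxE h.
Qed.

Lemma D_id1 (a b : 'I_n) : D ((1%:M : mat) a b) = 0.
Proof. by rewrite mxE; case: (a == b); rewrite ?D_1 ?D_0. Qed.

End Der.

Add Parametric Morphism (D : R -> R) (hD : is_derivation D) : (lder D) with signature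
  (@lser_eq F R n) ==> (@lser_eq F R n) as lder_mor.
Proof. by move=> X Y h; apply: lder_congr. Qed.

Local Notation one := (lmono 1%:M 0).

Lemma Ki_upper K Ki (B0 : mat) : lser_eq (lmul K Ki) one ->
  (forall t, 0 < t -> lcoef K t = 0) -> B0 *m lcoef K 0 = 1%:M ->
  forall j, 0 < j -> lcoef Ki j = 0.
Proof.
move=> hKKi hK hB0.
suff : forall d : nat, forall j, 0 < j -> lbound Ki < j + d%:Z -> lcoef Ki j = 0.
  by move=> h j hj; apply: (h (absz (lbound Ki))) => //; lia.
elim=> [|d IH] j hj hb; first by apply: lcoef_gt; lia.
have IHj : forall j', j < j' -> lcoef Ki j' = 0.
  by move=> j' hj'; apply: IH; lia.
set s := crng (- `|j| - `|lbound Ki|) (`|lbound K|).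
have e : lcoef (lmul K Ki) j = lcoef K 0 *m lcoef Ki j.
  rewrite (@lmulE _ _ _ s) ?uniq_rng //; last by cov.
  rewrite (@sum_single _ _ _ 0) ?uniq_rng ?subr0 //.
    by apply: covers_crng; lia.
  move=> t ht; have [h|h] := ltP 0 t; first by rewrite hK ?mul0mx.
  by rewrite IHj ?mulmx0 //; move/eqP: ht; lia.
have e2 : lcoef (lmul K Ki) j = 0.
  by rewrite hKKi lmonoE ifN //; apply/eqP; lia.
by rewrite -[lcoef Ki j]mul1mx -hB0 -mulmxA -e e2 mulmx0.
Qed.

Section Core.
Variables (D : R -> R) (K Ki : lser).
Hypothesis hD : is_derivation D.
Hypotheses (hKKi : lser_eq (lmul K Ki) one) (hKiK : lser_eq (lmul Ki K) one).

Lemma KiK_cancel Y : lser_eq (lmul Ki (lmul K Y)) Y.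
Proof. by rewrite -lmulA hKiK lmul1l. Qed.
Lemma KKi_cancel Y : lser_eq (lmul K (lmul Ki Y)) Y.
Proof. by rewrite -lmulA hKKi lmul1l. Qed.

Lemma dKi : lser_eq (lder D Ki) (lopp (lmul Ki (lmul (lder D K) Ki))).
Proof.
have h0 i : lcoef (lmul (lder D K) Ki) i + lcoef (lmul K (lder D Ki)) i = 0.
  have := lder_mul hD K Ki i; rewrite laddE => <-.
  by rewrite (lder_congr hD hKKi) lder_mono_const // => a b; apply: D_id1.
have h1 : lser_eq (lmul K (lder D Ki)) (lopp (lmul (lder D K) Ki)).
  by move=> i; rewrite loppE; apply/eqP; rewrite -addr_eq0 addrC h0.
by rewrite -{1}(KiK_cancel (lder D Ki)) h1 lmulNr.
Qed.

Section Gen.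
Variables (l : 'I_n -> int) (Dl : lser) (A B : mat) (p q : int) (P : lser).
Hypothesis hDl : forall i, lcoef Dl i = @delta_coef F R n l i.
Hypothesis hdA : forall k, @delta_coef F R n l k *m A = A *m @delta_coef F R n l k.
Hypothesis hAB : A *m B = B *m A.
Hypothesis hB : forall i, lcoef (lder D (lmono B q)) i = 0.
Hypothesis H : lser_eq (ladd (lder D (lmul K Dl)) (lmul (lmul K Dl) (lmono A p)))
                       (lmul P (lmul K Dl)).

Lemma dDl0 i : lcoef (lder D Dl) i = 0.
Proof.
rewrite lderE // hDl; apply/matrixP => a b; rewrite !mxE.
by case: ifP => _; rewrite ?D_1 ?D_0.
Qed.

Lemma core1 : lser_eq (ladd (lmul (lder D K) Ki) (lmul (lmul K (lmono A p)) Ki)) P.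
Proof.
have e1 : lser_eq (lmul (ladd (lder D K) (lmul K (lmono A p))) Dl) (lmul (lmul P K) Dl).
  rewrite lmulA -H lmulDl (lder_mul hD K Dl) !lmulA (delta_comm hDl p hdA).
  by move=> i; rewrite !laddE (lmul_null_r _ dDl0) addr0.
have hc := delta_cancel hDl e1.
by rewrite -lmulDl hc lmulA hKKi lmul1r.
Qed.

Lemma monoAB Y : lser_eq (lmul (lmono A p) (lmul (lmono B q) Y))
                          (lmul (lmono B q) (lmul (lmono A p) Y)).
Proof.
rewrite -!lmulA; apply: lmul_congr => // k; rewrite !mono_mul hAB addrC //.
Qed.

Lemma core2 : lser_eq (lder D (lmul (lmul K (lmono B q)) Ki))
                      (lcomm P (lmul (lmul K (lmono B q)) Ki)).
Proof.
have hQ : lser_eq (lmul (lder D K) Ki) (ladd P (lopp (lmul (lmul K (lmono A p)) Ki))).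
  by move=> i; rewrite laddE loppE -(core1 i) laddE addrK.
have hB2 : lser_eq (lder D (lmul (lmul K (lmono B q)) Ki))
  (ladd (lmul (lmul (lder D K) Ki) (lmul (lmul K (lmono B q)) Ki))
        (lopp (lmul (lmul (lmul K (lmono B q)) Ki) (lmul (lder D K) Ki)))).
  rewrite (lder_mul hD) (lder_mul hD) dKi lmulDl lmulNr !lmulA KiK_cancel.
  move=> i; rewrite !laddE !loppE.
  rewrite (lmul_null_r _ (lmul_null_l _ hB)) addr0 //.
rewrite hB2 /lcomm hQ lmulDl lmulDr lmulNl lmulNr !lmulA !KiK_cancel monoAB.
move=> i; rewrite !laddE !loppE opprB addrA subrK //.
Qed.

End Gen.
End Core.

Local Notation user := (user R n).

Lemma reflU_supp (X : user) i : - ubound X < i -> ucoef X (- i) = 0.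
Proof. by move=> h; apply: ucoef_supp; lia. Qed.
Definition reflU (X : user) : lser := @LSer F R n (- ubound X) (fun i => ucoef X (- i)) (@reflU_supp X).

Lemma reflUE (X : user) i : lcoef (reflU X) i = ucoef X (- i). Proof. by []. Qed.

Lemma user_eqP (X Y : user) : user_eq X Y <-> lser_eq (reflU X) (reflU Y).
Proof.
split=> h i; first by rewrite !reflUE h.
by have := h (- i); rewrite !reflUE opprK.
Qed.

Lemma refl_umul (X Y : user) : lser_eq (reflU (umul X Y)) (lmul (reflU X) (reflU Y)).
Proof.
move=> k; rewrite reflUE /= /umul_coef /lmul_coef /=.
have -> : - k - ubound X - ubound Y + 1 = - ubound X + - ubound Y - k + 1 by lia.
apply: eq_bigr => t _; congr (_ *m _); congr (ucoef _ _); ring.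
Qed.

Lemma refl_uadd (X Y : user) : lser_eq (reflU (uadd X Y)) (ladd (reflU X) (reflU Y)).
Proof. by []. Qed.
Lemma refl_uopp (X : user) : lser_eq (reflU (uopp X)) (lopp (reflU X)).
Proof. by []. Qed.
Lemma refl_umono (A : mat) m : lser_eq (reflU (umono A m)) (lmono A (- m)).
Proof. by move=> k; rewrite reflUE /= -eqr_oppLR. Qed.
Lemma refl_uder D (X : user) : is_derivation D ->
  lser_eq (reflU (uder D X)) (lder D (reflU X)).
Proof.
move=> hD k; rewrite lderE // !reflUE /=; case: ifP => // /negbT; rewrite -ltNge.
by move=> h; rewrite ucoef_supp // mapD_0.
Qed.

Lemma mono_shift (K Ki : lser) (A : mat) p q r : r = p + q ->
  lser_eq (lmul (lmul K (lmono A r)) Ki)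
          (lmul (lmul (lmul K (lmono A p)) Ki) (lmono 1%:M q)).
Proof. by move=> ->; rewrite mono_split !lmulA lmono1_comm. Qed.

Lemma lcomm_congr (X X' Y : lser) : lser_eq X X' -> lser_eq (lcomm X Y) (lcomm X' Y).
Proof. by move=> h; rewrite /lcomm h. Qed.

Lemma lcomm_congr2 (X X' Y Y' : lser) : lser_eq X X' -> lser_eq Y Y' ->
  lser_eq (lcomm X Y) (lcomm X' Y').
Proof. by move=> h h'; rewrite /lcomm h h'. Qed.

Lemma phi_refl D (k X P' : user) (A : mat) m : is_derivation D ->
  user_eq (uadd (uder D (umul k X)) (umul (umul k X) (umono A m))) (umul P' (umul k X)) ->
  lser_eq (ladd (lder D (lmul (reflU k) (reflU X))) (lmul (lmul (reflU k) (reflU X)) (lmono A (-m))))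
          (lmul (reflU P') (lmul (reflU k) (reflU X))).
Proof.
move=> hD /user_eqP h i.
rewrite laddE -(lder_congr hD (refl_umul k X) i) -(refl_uder (umul k X) hD i).
rewrite -(lmul_congr (refl_umul k X) (refl_umono A m) i) -(refl_umul _ _ i).
rewrite -(lmul_congr (lser_eq_refl (reflU P')) (refl_umul k X) i) -(refl_umul _ _ i).
exact: h i.
Qed.

Lemma refl_udelta (l : 'I_n -> int) i :
  lcoef (reflU (udelta R l)) i = @delta_coef F R n (fun a => - l a) i.
Proof.
rewrite reflUE /=; apply/matrixP => a b; rewrite !mxE.
by congr (if _ then _ else _); congr (_ && _); apply/eqP/eqP; lia.
Qed.

Lemma refl_ucomm (X Y : user) : lser_eq (reflU (ucomm X Y)) (lcomm (reflU X) (reflU Y)).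
Proof. by rewrite /ucomm refl_uadd refl_uopp !refl_umul. Qed.

End Lser.

Theorem proposition4p1 (F : numClosedFieldType) (R : comAlgType F) (n r : nat)
  (D : int -> 'I_r -> R -> R) (E : 'I_r -> 'M[F]_n) (l : 'I_n -> int)
  (k1 k1inv : lser R n) (k2 k2inv : user R n)
  (M N : int -> 'I_r -> laur R n) :
  (* commuting C-linear derivations d_{m alpha} of R *)
  (forall m a, is_derivation (D m a)) ->
  (forall m a m' b x, D m a (D m' b x) = D m' b (D m a x)) ->
  (* t = span(E_1..E_r) *)
  is_t_basis E ->
  (* delta(l) in Delta(t) *)
  (forall a, lser_eq (lmul (ldelta R l) (lmono (liftmx R (E a)) 0))
                     (lmul (lmono (liftmx R (E a)) 0) (ldelta R l))) ->
  (* k1 in G_{<0}, with inverse k1inv *)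
  in_Gneg k1 ->
  lser_eq (lmul k1 k1inv) (lmono 1%:M 0) ->
  lser_eq (lmul k1inv k1) (lmono 1%:M 0) ->
  (* k2 in G_{>=0}, with inverse k2inv *)
  in_Gnonneg k2 ->
  user_eq (umul k2 k2inv) (umono 1%:M 0) ->
  user_eq (umul k2inv k2) (umono 1%:M 0) ->
  let psi := lmul k1 (ldelta R l) in
  let phi := umul k2 (udelta R l) in
  (* M_{m alpha} (m >= 0) are polynomials in z *)
  (forall (m : int) a, 0 <= m -> forall i : int, i < 0 -> pcoef (M m a) i = 0) ->
  (* N_{m beta} (m < 0) are polynomials in z^{-1} without constant term *)
  (forall (m : int) b, m < 0 -> forall i : int, 0 <= i -> pcoef (N m b) i = 0) ->
  (* d_{m alpha}(psi) = M_{m alpha} psi, d_{m alpha}(phi) = M_{m alpha} phi *)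
  (forall (m : int) a, 0 <= m ->
     lser_eq (ladd (lder (D m a) psi) (lmul psi (lmono (liftmx R (E a)) m)))
             (lmul (laur_l (M m a)) psi)) ->
  (forall (m : int) a, 0 <= m ->
     user_eq (uadd (uder (D m a) phi) (umul phi (umono (liftmx R (E a)) m)))
             (umul (laur_u (M m a)) phi)) ->
  (* d_{m beta}(psi) = N_{m beta} psi, d_{m beta}(phi) = N_{m beta} phi *)
  (forall (m : int) b, m < 0 ->
     lser_eq (ladd (lder (D m b) psi) (lmul psi (lmono (liftmx R (E b)) m)))
             (lmul (laur_l (N m b)) psi)) ->
  (forall (m : int) b, m < 0 ->
     user_eq (uadd (uder (D m b) phi) (umul phi (umono (liftmx R (E b)) m)))
             (umul (laur_u (N m b)) phi)) ->
  (* U_alpha = k1 E_alpha k1^{-1},  W_beta = k2 E_beta z^{-1} k2^{-1} *)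
  let U := fun a => lmul (lmul k1 (lmono (liftmx R (E a)) 0)) k1inv in
  let W := fun b => umul (umul k2 (umono (liftmx R (E b)) (-1))) k2inv in
  [/\ forall (m : int) a, 0 <= m ->
        laur_eq (M m a) (piGe0 (lmul (U a) (lmono 1%:M m))),
      forall (m : int) b, m < 0 ->
        laur_eq (N m b) (piLt0 (umul (W b) (umono 1%:M (m + 1)))) &
      combined_solution D U W].
Proof.
move=> hDer hComm hT hDelta hK1 hK1a hK1b hK2 hK2a hK2b psi phi.
move=> hMpoly hNpoly hpsiM hphiM hpsiN hphiN U W.
subst psi phi U W.
have hAB : forall a b, liftmx R (E a) *m liftmx R (E b) = liftmx R (E b) *m liftmx R (E a).
  case: hT => _ hc _ _ _ a b.
  have e : (fun c : F => c%:A : R) = in_alg R by [].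
  by rewrite /liftmx e -!map_mxM hc.
have hBc : forall m a b q i, lcoef (lder (D m a) (lmono (liftmx R (E b)) q)) i = 0.
  move=> m a b q i; apply: lder_mono_const => // x y.
  by rewrite mxE D_alg.
have hdA1 : forall a k, delta_coef R l k *m liftmx R (E a) = liftmx R (E a) *m delta_coef R l k.
  by move=> a k; have := hDelta a k; rewrite lmul_mono_r lmul_mono_l subr0.
have hdA2 : forall a k, delta_coef R (fun c => - l c) k *m liftmx R (E a) =
                        liftmx R (E a) *m delta_coef R (fun c => - l c) k.
  by move=> a k; rewrite -!refl_udelta reflUE hdA1.
case: hK1 => hK10 hK1p.
case: hK2 => hK2n [B0 [hB0 _]].
have h2a : lser_eq (lmul (reflU k2) (reflU k2inv)) (lmono 1%:M 0).
  move=> i; rewrite -(refl_umul k2 k2inv i) ((user_eqP _ _).1 hK2a i).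
  by rewrite (refl_umono _ _ i) oppr0.
have h2b : lser_eq (lmul (reflU k2inv) (reflU k2)) (lmono 1%:M 0).
  move=> i; rewrite -(refl_umul k2inv k2 i) ((user_eqP _ _).1 hK2b i).
  by rewrite (refl_umono _ _ i) oppr0.
have Ki1up : forall t, 0 < t -> lcoef k1inv t = 0.
  by apply: (Ki_upper (B0 := 1%:M) hK1a hK1p); rewrite hK10 mul1mx.
have Ki2up : forall t, 0 < t -> lcoef (reflU k2inv) t = 0.
  apply: (Ki_upper (B0 := B0) h2a) => [t ht|]; last by rewrite reflUE oppr0.
  by rewrite reflUE hK2n //; lia.
have dK1 : forall m a t, -1 < t -> lcoef (lder (D m a) k1) t = 0.
  move=> m a t ht; rewrite lderE //.
  have [h|h] := ltP 0 t; first by rewrite hK1p // mapD_0.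
  have -> : t = 0 by lia.
  by rewrite hK10; apply/matrixP => x y; rewrite [LHS]mxE [RHS]mxE (D_id1 (hDer m a)).
have dK2 : forall m a t, 0 < t -> lcoef (lder (D m a) (reflU k2)) t = 0.
  by move=> m a t ht; rewrite lderE // reflUE hK2n ?mapD_0 //; lia.
have P1 : forall m a, 0 <= m -> laur_eq (M m a)
    (piGe0 (lmul (lmul (lmul k1 (lmono (liftmx R (E a)) 0)) k1inv) (lmono 1%:M m))).
  move=> m a hm i /=; have [hi|hi] := ltP i 0.
    by rewrite hMpoly // ifN // -ltNge.
  have c1 := core1 (hDer m a) hK1a (Dl := ldelta R l) (fun _ => erefl) (hdA1 a) (hpsiM m a hm) i.
  rewrite laddE (lmul_zero_above (a := -1) (b := 0) (dK1 m a) Ki1up) ?add0r in c1; last by lia.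
  rewrite (mono_shift k1 k1inv (liftmx R (E a)) (p := 0) (q := m) (r := m) _ i) in c1;
    last by rewrite add0r.
  exact: (esym c1).
have hm1 : forall A : 'M[R]_n, lser_eq (reflU (umono A (-1))) (lmono A 1).
  by move=> A j; rewrite (refl_umono _ _ j) /= opprK.
have hWrefl : forall b, lser_eq (reflU (umul (umul k2 (umono (liftmx R (E b)) (-1))) k2inv))
    (lmul (lmul (reflU k2) (lmono (liftmx R (E b)) 1)) (reflU k2inv)).
  move=> b; apply: lser_eq_trans (refl_umul _ _) _; apply: lmul_congr => //.
  by apply: lser_eq_trans (refl_umul _ _) _; apply: lmul_congr.
have P2 : forall m b, m < 0 -> laur_eq (N m b)
    (piLt0 (umul (umul (umul k2 (umono (liftmx R (E b)) (-1))) k2inv) (umono 1%:M (m + 1)))).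
  move=> m b hm i /=; have [hi|hi] := ltP i 0; last first.
    by rewrite hNpoly // ifN // -leNgt.
  have H2 := phi_refl (hDer m b) (hphiN m b hm).
  have c1 := core1 (hDer m b) h2a (Dl := reflU (udelta R l)) (@refl_udelta _ _ _ l) (hdA2 b) H2 (- i).
  rewrite laddE (lmul_zero_above (a := 0) (b := 0) (dK2 m b) Ki2up) ?add0r in c1; last by lia.
  rewrite (mono_shift (reflU k2) (reflU k2inv) (liftmx R (E b)) (p := 1) (q := - (m + 1)) (r := - m) _ (- i)) in c1;
    last by ring.
  have e : lcoef (reflU (umul (umul (umul k2 (umono (liftmx R (E b)) (-1))) k2inv) (umono 1%:M (m + 1)))) (- i) = pcoef (N m b) i.
    rewrite (refl_umul _ _ (- i)) (lmul_congr (hWrefl b) (refl_umono _ _) (- i)) c1.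
    by rewrite reflUE /= opprK.
  by move: e; rewrite reflUE opprK => e; exact: (esym e).
split => //; split.
- move=> m a1 a2 hm.
  have c2 := core2 (hDer m a1) hK1a hK1b (Dl := ldelta R l) (fun _ => erefl) (hdA1 a1)
     (hAB a1 a2) (hBc m a1 a2 0) (hpsiM m a1 hm).
  apply: lser_eq_trans c2 _; apply: lcomm_congr => j; exact: (P1 m a1 hm j).
- move=> m a1 b hm; apply/user_eqP.
  have c2 := core2 (hDer m a1) h2a h2b (Dl := reflU (udelta R l)) (@refl_udelta _ _ _ l)
     (hdA2 a1) (hAB a1 b) (hBc m a1 b 1) (phi_refl (hDer m a1) (hphiM m a1 hm)).
  apply: lser_eq_trans (refl_uder _ (hDer m a1)) _.
  apply: lser_eq_trans (lder_congr (hDer m a1) (hWrefl b)) _.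
  apply: lser_eq_trans c2 _.
  apply: lser_eq_trans _ (lser_eq_sym (refl_ucomm _ _)).
  apply: lcomm_congr2; last exact: lser_eq_sym (hWrefl b).
  by move=> j; rewrite !reflUE; exact: (P1 m a1 hm (- j)).
- move=> m b1 b2 hm; apply/user_eqP.
  have c2 := core2 (hDer m b1) h2a h2b (Dl := reflU (udelta R l)) (@refl_udelta _ _ _ l)
     (hdA2 b1) (hAB b1 b2) (hBc m b1 b2 1) (phi_refl (hDer m b1) (hphiN m b1 hm)).
  apply: lser_eq_trans (refl_uder _ (hDer m b1)) _.
  apply: lser_eq_trans (lder_congr (hDer m b1) (hWrefl b2)) _.
  apply: lser_eq_trans c2 _.
  apply: lser_eq_trans _ (lser_eq_sym (refl_ucomm _ _)).
  apply: lcomm_congr2; last exact: lser_eq_sym (hWrefl b2).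
  by move=> j; rewrite !reflUE; exact: (P2 m b1 hm (- j)).
- move=> m b a hm.
  have c2 := core2 (hDer m b) hK1a hK1b (Dl := ldelta R l) (fun _ => erefl) (hdA1 b)
     (hAB b a) (hBc m b a 0) (hpsiN m b hm).
  apply: lser_eq_trans c2 _; apply: lcomm_congr => j; exact: (P2 m b hm j).
Qed.
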